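(* Let $R$ be a commutative ring with unit and let $M\subset\mathbb{M}_R$ be a $\Rightarrow_R$-connected subset. Then for any nonempty subset $M'\subset M$ the homomorphism $\rho^R_{M,M'}\colon R[q]^M\to R[q]^{M'}$ is injective.
   Context: $q$ is an indeterminate. $\mathbb{M}_R$ is the set of monic polynomials in $R[q]$. For $M\subset\mathbb{M}_R$, $M^*$ is the multiplicative set generated by $M$, directed by divisibility, and $R[q]^M=\varprojlim_{f\in M^*}R[q]/(f)$; for $M'\subset M$, $\rho^R_{M,M'}$ is induced by the identity of $R[q]$. For $f,g\in\mathbb{M}_R$ write $f\Rightarrow_R g$ if there exist an ideal $I\subset R$ with $\bigcap_{j\ge0}I^j=(0)$ and $m\ge0$ with $f^m\in(g)+I[q]$. $M$ is $\Rightarrow_R$-connected if $M$ is nonempty and for all $f,f'\in M$ there is a sequence $f=f_0\Rightarrow_R f_1\Rightarrow_R\cdots\Rightarrow_R f_r=f'$ ($r\ge0$) in $M$. *)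

(* Defs.v *)
From mathcomp Require Import all_boot all_order all_algebra.
Set Implicit Arguments. Unset Strict Implicit. Unset Printing Implicit Defensive.
Import GRing.Theory.
Local Open Scope ring_scope.

Section Defs.
Variable R : comNzRingType.

Definition pdvd (f g : {poly R}) : Prop := exists h : {poly R}, g = h * f.

Definition pcong (f a b : {poly R}) : Prop := exists h : {poly R}, a - b = h * f.

Definition is_ideal (I : R -> Prop) : Prop :=
  [/\ I 0, (forall a b, I a -> I b -> I (a + b)) & (forall r a, I a -> I (r * a))].

Definition in_ideal_pow (I : R -> Prop) (j : nat) (x : R) : Prop :=
  exists (n : nat) (r : 'I_n -> R) (a : 'I_n -> 'I_j -> R),
    (forall i k, I (a i k)) /\ x = \sum_(i < n) r i * \prod_(k < j) a i k.

Definition in_ideal_poly (I : R -> Prop) (p : {poly R}) : Prop :=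
  forall i : nat, I p`_i.

Definition implR (f g : {poly R}) : Prop :=
  exists (I : R -> Prop) (m : nat),
    [/\ is_ideal I,
        (forall x, (forall j, in_ideal_pow I j x) -> x = 0) &
        exists (h p : {poly R}), in_ideal_poly I p /\ f ^+ m = h * g + p].

Inductive implR_chain (M : {poly R} -> Prop) : {poly R} -> {poly R} -> Prop :=
  | chain_refl f : M f -> implR_chain M f f
  | chain_step f g h : M f -> implR f g -> implR_chain M g h -> implR_chain M f h.

Definition implR_connected (M : {poly R} -> Prop) : Prop :=
  (exists f, M f) /\ forall f f', M f -> M f' -> implR_chain M f f'.

Definition mult_closure (M : {poly R} -> Prop) (f : {poly R}) : Prop :=
  exists s : seq {poly R}, (forall p, p \in s -> M p) /\ f = \prod_(p <- s) p.

(* An element of R[q]^M = lim_{f in M^*} R[q]/(f), represented by a family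
   of representatives x f of the classes in R[q]/(f), compatible with the
   transition maps R[q]/(g) -> R[q]/(f) for f | g. *)
Definition proj_lim_elt (M : {poly R} -> Prop) (x : {poly R} -> {poly R}) : Prop :=
  forall f g, mult_closure M f -> mult_closure M g -> pdvd f g -> pcong f (x g) (x f).

Definition proj_lim_eq (M : {poly R} -> Prop) (x y : {poly R} -> {poly R}) : Prop :=
  forall f, mult_closure M f -> pcong f (x f) (y f).

End Defs.

(* Main.v *)
Require Import Defs.
From mathcomp Require Import all_boot all_order all_algebra.
From mathcomp Require Import ring.
Set Implicit Arguments. Unset Strict Implicit. Unset Printing Implicit Defensive.
Import GRing.Theory.
Local Open Scope ring_scope.

Section Ideals.
Variable R : comNzRingType.
Implicit Types (I K : R -> Prop).

Lemma ip0 I j : in_ideal_pow I j 0.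
Proof. exists 0%N, (fun _ => 0), (fun _ _ => 0); split; first by case.
by rewrite big_ord0. Qed.

Lemma ip_zero I x : in_ideal_pow I 0 x.
Proof. exists 1%N, (fun _ => x), (fun _ _ => 0); split; first by move=> i [].
by rewrite big_ord1 big_ord0 mulr1. Qed.

Lemma ipD I j a b : in_ideal_pow I j a -> in_ideal_pow I j b -> in_ideal_pow I j (a + b).
Proof.
move=> [n1 [r1 [a1 [H1 ->]]]] [n2 [r2 [a2 [H2 ->]]]].
exists (n1 + n2)%N, (fun i => match split i with inl i1 => r1 i1 | inr i2 => r2 i2 end),
  (fun i => match split i with inl i1 => a1 i1 | inr i2 => a2 i2 end); split.
  by move=> i k; case: (split i).
rewrite big_split_ord /=; congr (_ + _); apply: eq_bigr => i _.
  by rewrite (unsplitK (inl _ i)).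
by rewrite (unsplitK (inr _ i)).
Qed.

Lemma ipM I j r a : in_ideal_pow I j a -> in_ideal_pow I j (r * a).
Proof.
move=> [n [r1 [a1 [H1 ->]]]]; exists n, (fun i => r * r1 i), a1; split => //.
by rewrite mulr_sumr; apply: eq_bigr => i _; rewrite mulrA.
Qed.

Lemma ipMI I j x a : in_ideal_pow I j x -> I a -> in_ideal_pow I j.+1 (x * a).
Proof.
move=> [n [r1 [a1 [H1 ->]]]] Ia.
exists n, r1, (fun i k => if unlift ord0 k is Some k' then a1 i k' else a); split.
  by move=> i k; case: (unlift ord0 k).
rewrite mulr_suml; apply: eq_bigr => i _.
rewrite big_ord_recl unlift_none; under [X in _ = _ * (_ * X)]eq_bigr => k _ do rewrite liftK.
by rewrite [a * _]mulrC mulrA.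
Qed.

Lemma ip_ideal I j : is_ideal (in_ideal_pow I j).
Proof. split; [exact: ip0 | exact: ipD | exact: ipM]. Qed.

Lemma sumK K (n : nat) (F : 'I_n -> R) : is_ideal K -> (forall i, K (F i)) -> K (\sum_(i < n) F i).
Proof. move=> [K0 KD KM] HF; elim/big_ind: _ => //. Qed.

Lemma polyK_mul K1 K2 K3 (p q : {poly R}) : is_ideal K3 ->
  (forall a b, K1 a -> K2 b -> K3 (a * b)) -> in_ideal_poly K1 p -> in_ideal_poly K2 q ->
  in_ideal_poly K3 (p * q).
Proof. move=> HK3 Hm Hp Hq i; rewrite coefM; apply: sumK => // j; exact: Hm. Qed.

Lemma polyK_add K (p q : {poly R}) : is_ideal K -> in_ideal_poly K p -> in_ideal_poly K q ->
  in_ideal_poly K (p + q).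
Proof. by move=> [K0 KD KM] Hp Hq i; rewrite coefD; apply: KD. Qed.

Lemma polyK_mull K (u p : {poly R}) : is_ideal K -> in_ideal_poly K p -> in_ideal_poly K (u * p).
Proof. move=> HK Hp i; rewrite coefM; apply: sumK => // j.
by case: HK => _ _; apply. Qed.

Lemma polyK_mulr K (u p : {poly R}) : is_ideal K -> in_ideal_poly K p -> in_ideal_poly K (p * u).
Proof. by move=> HK Hp; rewrite mulrC; apply: polyK_mull. Qed.

Lemma polyK_rmodp K (p d : {poly R}) : d \is monic -> is_ideal K -> in_ideal_poly K p ->
  in_ideal_poly K (Pdiv.Ring.rmodp p d).
Proof.
move=> md HK Hp i.
rewrite -[p]coefK poly_def (Pdiv.RingMonic.rmodp_sum md) coef_sum.
apply: sumK => // j; rewrite (Pdiv.RingMonic.rmodpZ md) coefZ.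
by case: HK => _ _; rewrite mulrC; apply.
Qed.

End Ideals.
Section Main.
Variable R : comNzRingType.
Implicit Types (f g h G H : {poly R}).



Lemma powers I m f g hh pp : is_ideal I -> in_ideal_poly I pp -> f ^+ m = hh * g + pp ->
  forall k J, exists N v p, f ^+ N = v * g ^+ k + p /\ in_ideal_poly (in_ideal_pow I J) p.
Proof.
move=> HI Hpp Hf.
have P1 J : exists N v p, f ^+ N = v * g + p /\ in_ideal_poly (in_ideal_pow I J) p.
  elim: J => [|J [N [v [p [Hfe Hp]]]]].
    by exists 0%N, 0, 1; split; [rewrite expr0 mul0r add0r | move=> i; apply: ip_zero].
  exists (N + m)%N, (v * (hh * g + pp) + p * hh), (p * pp); split.
    by rewrite exprD Hfe Hf; ring.
  apply: (@polyK_mul _ (in_ideal_pow I J) I) => //; first exact: ip_ideal.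
  by move=> a b Ha Hb; apply: ipMI.
move=> k J; elim: k => [|k [N1 [v [p1 [Hf1 Hp1]]]]].
  by exists 0%N, 1, 0; split; [rewrite !expr0 mulr1 addr0 | move=> i; rewrite coef0; apply: ip0].
have [N2 [w [p2 [Hf2 Hp2]]]] := P1 J.
exists (N1 + N2)%N, (v * w), (v * g ^+ k * p2 + p1 * w * g + p1 * p2); split.
  by rewrite exprD Hf1 Hf2 exprSr; ring.
have HK := ip_ideal I J.
apply: polyK_add => //; first apply: polyK_add => //.
- exact: polyK_mull.
- by rewrite -mulrA; apply: polyK_mulr.
- exact: polyK_mulr.
Qed.

Definition mc := @mult_closure R.

Lemma mc_mul M f g : mc M f -> mc M g -> mc M (f * g).
Proof.
move=> [s1 [H1 ->]] [s2 [H2 ->]]; exists (s1 ++ s2); split; last by rewrite big_cat.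
by move=> p; rewrite mem_cat => /orP [/H1|/H2].
Qed.

Lemma mc_pow M f n : M f -> mc M (f ^+ n).
Proof.
move=> Mf; exists (nseq n f); split; first by move=> p /nseqP [-> _].
by rewrite big_nseq; elim: n => [|n IH] /=; rewrite ?expr0 // exprS IH.
Qed.

Lemma mc_monic M f : (forall f, M f -> f \is monic) -> mc M f -> f \is monic.
Proof.
move=> Hm [s [Hs ->]]; elim: s Hs => [|a s IH] Hs; first by rewrite big_nil monic1.
rewrite big_cons monicMl; first by apply: IH => p Hp; apply: Hs; rewrite inE Hp orbT.
by apply: Hm; apply: Hs; rewrite inE eqxx.
Qed.

Variable M : {poly R} -> Prop.
Hypothesis Hmon : forall f, M f -> f \is monic.
Variable z : {poly R} -> {poly R}.
Hypothesis Hz : forall f g, mc M f -> mc M g -> pdvd f g -> exists h, z g - z f = h * f.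
Definition Good H := exists c, z H = c * H.

Lemma step f g G : M f -> M g -> implR f g -> mc M G ->
  (forall a, Good (f ^+ a * G)) -> forall k, Good (g ^+ k * G).
Proof.
move=> Mf Mg [I [m [HI Hcap [hh [pp [Hpp Hfm]]]]]] MG Ha k.
set H := g ^+ k * G.
have mG := mc_monic Hmon MG.
have mH : H \is monic by rewrite /H monicMr // monic_exp // Hmon.
have MH : mc M H by apply: mc_mul => //; apply: mc_pow.
suff r0 : Pdiv.Ring.rmodp (z H) H = 0.
  by exists (Pdiv.Ring.rdivp (z H) H); rewrite {1}(Pdiv.RingMonic.rdivp_eq mH (z H)) r0 addr0.
apply/polyP => i; rewrite coef0; apply: Hcap => J.
have [N [v [p [HfN Hp]]]] := powers HI Hpp Hfm k J.
have MfG : mc M (f ^+ N * G) by apply: mc_mul => //; apply: mc_pow.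
have MfH : mc M (f ^+ N * H) by apply: mc_mul => //; apply: mc_pow.
have [c1 Hc1] : exists c, z (f ^+ N * H) - z (f ^+ N * G) = c * (f ^+ N * G).
  by apply: Hz => //; exists (g ^+ k); rewrite /H; ring.
have [c2 Hc2] := Ha N.
have [c3 Hc3] : exists c, z (f ^+ N * H) - z H = c * H.
  by apply: Hz => //; exists (f ^+ N); rewrite mulrC.
have -> : z H = ((c1 + c2) * v - c3) * H + (c1 + c2) * G * p.
  have -> : z H = z (f ^+ N * H) - c3 * H by rewrite -Hc3; ring.
  have -> : z (f ^+ N * H) = c1 * (f ^+ N * G) + c2 * (f ^+ N * G) by rewrite -Hc2 -Hc1; ring.
  by rewrite HfN /H; ring.
rewrite (Pdiv.RingMonic.rmodpD mH) (Pdiv.RingMonic.rmodp_mull mH) add0r.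
apply: polyK_rmodp => //; first exact: ip_ideal.
by apply: polyK_mull => //; exact: ip_ideal.
Qed.


Lemma chain_head f h : implR_chain M f h -> M f.
Proof. by case. Qed.

Lemma chain_good f h : implR_chain M f h -> forall G, mc M G ->
  (forall a, Good (f ^+ a * G)) -> forall k, Good (h ^+ k * G).
Proof.
elim => [f0 _ | f0 g0 h0 Mf Hi Hc IH] G MG Ha //.
apply: IH => //; apply: (step Mf (chain_head Hc) Hi MG Ha).
Qed.

End Main.

Theorem corollary3p5 (R : comNzRingType) (M M' : {poly R} -> Prop) :
  (forall f, M f -> f \is monic) ->
  implR_connected M ->
  (forall f, M' f -> M f) ->
  (exists f, M' f) ->
  forall x y : {poly R} -> {poly R},
    proj_lim_elt M x -> proj_lim_elt M y ->
    proj_lim_eq M' x y -> proj_lim_eq M x y.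
Proof.
move=> Hmon [_ Hconn] HM'M [f0 M'f0] x y Hx Hy Hxy.
pose z := fun f => x f - y f.
have Hz : forall f g, mc M f -> mc M g -> pdvd f g -> exists h, z g - z f = h * f.
  move=> f g Mf Mg Hd; have [h1 H1] := Hx f g Mf Mg Hd; have [h2 H2] := Hy f g Mf Mg Hd.
  by exists (h1 - h2); rewrite mulrBl -H1 -H2 /z; ring.
have Mf0 := HM'M f0 M'f0.
have base a : Good z (f0 ^+ a).
  have [h Hh] := Hxy _ (mc_pow a M'f0); by exists h.
have main s : (forall p, p \in s -> M p) -> forall a, Good z (f0 ^+ a * \prod_(p <- s) p).
  elim: s => [|g s IH] Hs a; first by rewrite big_nil mulr1.
  have Mg : M g by apply: Hs; rewrite inE eqxx.
  have Hs' : forall p, p \in s -> M p by move=> p Hp; apply: Hs; rewrite inE Hp orbT.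
  have MG : mc M (f0 ^+ a * \prod_(p <- s) p).
    apply: mc_mul; first exact: mc_pow.
    by exists s.
  have := chain_good Hmon Hz (Hconn _ _ Mf0 Mg) MG _ 1.
  rewrite expr1 big_cons mulrCA; apply => b.
  by rewrite mulrA -exprD; apply: IH.
move=> F [s [Hs ->]]; have [c Hc] := main s Hs 0%N.
by exists c; rewrite expr0 mul1r in Hc.
Qed.
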